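(* Let $\Delta\geq3$ be an integer and $(\beta,\gamma)$ antiferromagnetic, $\lambda>0$, with $(\beta,\gamma,\lambda)\neq(\beta,\beta,1)$. Suppose there exists a pair of field gadgets $\mathcal{T}_1,\mathcal{T}_2$ of maximum degree $\Delta$ with $R_{\mathcal{T}_1}=R_{\mathcal{T}_2}$ but $M_{\mathcal{T}_1}\neq M_{\mathcal{T}_2}$. Then one can construct, for $j=0,1,2,\dots$, an infinite sequence of pairs of field gadgets $\mathcal{T}_{1,j},\mathcal{T}_{2,j}$ of maximum degree $\Delta$ with effective fields $R_{1,j},R_{2,j}$ and magnetization gaps $M_{1,j},M_{2,j}$ such that $R_{1,j}=R_{2,j}$ and $M_{1,j}\neq M_{2,j}$ for every $j$, and moreover the values $R_{1,j}$, $j\geq0$, are pairwise distinct.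
   Context: A pair $(\beta,\gamma)$ with $\beta,\gamma\geq0$ is antiferromagnetic if $\beta\gamma\in[0,1)$ and at least one is nonzero. For a graph $G=(V,E)$ and $\lambda>0$, $\mu_{G;\beta,\gamma,\lambda}(\sigma)=\lambda^{|\sigma|}\beta^{m_0(\sigma)}\gamma^{m_1(\sigma)}/Z$ for $\sigma:V\to\{0,1\}$, $|\sigma|=\sum_v\sigma(v)$, $m_0,m_1$ the numbers of edges with both endpoints spin $0$, resp. spin $1$, convention $0^0=1$. A field gadget is a rooted tree $\mathcal{T}$ whose root $\rho$ has degree one; in the special case $\lambda=\frac{1-\beta}{1-\gamma}$ with $\beta\neq\gamma$, a field gadget is such a rooted tree in which in addition a triangle is attached on a subset of the leaves. With $\mu=\mu_{\mathcal{T};\beta,\gamma,\lambda}$, the effective field is $R_{\mathcal{T}}=\frac{1}{\lambda}\frac{\mu(\sigma(\rho)=1)}{\mu(\sigma(\rho)=0)}$ and the magnetization gap is $M_{\mathcal{T}}=\mathbf{E}_\mu[|\sigma|\mid\sigma(\rho)=1]-\mathbf{E}_\mu[|\sigma|\mid\sigma(\rho)=0]$. *)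

(* Defs.v *)
From HB Require Import structures.
From mathcomp Require Import all_boot all_order all_algebra.
From mathcomp Require Import reals.
Set Implicit Arguments. Unset Strict Implicit. Unset Printing Implicit Defensive.
Import Order.TTheory GRing.Theory Num.Theory.
Local Open Scope ring_scope.

Record rootedGraph := RGraph { gN : nat; gE : rel 'I_gN; groot : 'I_gN }.

Definition simple_graph (n : nat) (e : rel 'I_n) : Prop :=
  (forall u v, e u v = e v u) /\ (forall u, e u u = false).

Definition deg (n : nat) (e : rel 'I_n) (v : 'I_n) : nat := #|[set u | e v u]|.

Definition nedges (n : nat) (e : rel 'I_n) : nat :=
  #|[set p : 'I_n * 'I_n | (p.1 < p.2)%N && e p.1 p.2]|.

Definition maxdeg_le (T : rootedGraph) (D : nat) : Prop :=
  forall v, (deg (@gE T) v <= D)%N.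

Definition induced_off (n : nat) (e : rel 'I_n) (X : {set 'I_n}) : rel 'I_n :=
  [rel u v | [&& e u v, u \notin X & v \notin X]].

Definition is_tree_off (n : nat) (e : rel 'I_n) (X : {set 'I_n}) : Prop :=
  (forall u v, u \notin X -> v \notin X -> connect (induced_off e X) u v) /\
  nedges (induced_off e X) = (#|~: X| - 1)%N.

(* X is the set of extra vertices of triangles attached to non-root leaves
   of the tree induced on ~X: every x in X has degree 2 and lies in a
   triangle {x, x', y} with x' in X, y a non-root leaf of the tree, and each
   vertex outside X has either 0 or 2 neighbours in X (one triangle per leaf). *)
Definition triangles_on_leaves (n : nat) (e : rel 'I_n) (r : 'I_n)
    (X : {set 'I_n}) : Prop :=
  (forall x, x \in X -> deg e x = 2%N /\
     exists y x', [/\ y \notin X, x' \in X, x' != x, y != r &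
       [/\ e x y, e x x', e x' y & deg (induced_off e X) y = 1%N]]) /\
  (forall y, y \notin X -> #|[set x in X | e y x]| \in [:: 0%N; 2%N]).

(* Field gadget: a rooted tree whose root has degree one; in the special case
   lam = (1-b)/(1-g) with b <> g, triangles may additionally be attached on a
   subset of the (non-root) leaves. *)
Definition is_field_gadget (R : realType) (b g lam : R) (T : rootedGraph) : Prop :=
  simple_graph (@gE T) /\
  exists X : {set 'I_(gN T)},
    [/\ groot T \notin X, deg (@gE T) (groot T) = 1%N,
        is_tree_off (@gE T) X,
        triangles_on_leaves (@gE T) (groot T) X &
        (X != set0 -> lam = (1 - b) / (1 - g) /\ b <> g)].

Definition antiferro (R : realType) (b g : R) : Prop :=
  0 <= b /\ 0 <= g /\ b * g < 1 /\ (b != 0 \/ g != 0).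

Section Gibbs.
Variables (R : realType) (b g lam : R) (T : rootedGraph).
Local Notation V := 'I_(gN T).
Local Notation e := (@gE T).

Definition spins := {ffun V -> bool}.
Definition nones (s : spins) : nat := #|[set v | s v]|.
Definition m0 (s : spins) : nat :=
  #|[set p : V * V | [&& (p.1 < p.2)%N, e p.1 p.2, ~~ s p.1 & ~~ s p.2]]|.
Definition m1 (s : spins) : nat :=
  #|[set p : V * V | [&& (p.1 < p.2)%N, e p.1 p.2, s p.1 & s p.2]]|.
(* unnormalised Gibbs weight lam^|s| b^m0 g^m1 (with 0^0 = 1) *)
Definition weight (s : spins) : R := lam ^+ nones s * b ^+ m0 s * g ^+ m1 s.
Definition Zpart : R := \sum_(s : spins) weight s.
Definition mu (s : spins) : R := weight s / Zpart.

Definition mu_root (c : bool) : R := \sum_(s : spins | s (groot T) == c) mu s.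

Definition cond_mag (c : bool) : R :=
  (\sum_(s : spins | s (groot T) == c) mu s * (nones s)%:R) / mu_root c.

Definition eff_field : R := lam^-1 * (mu_root true / mu_root false).
Definition mag_gap : R := cond_mag true - cond_mag false.
End Gibbs.

(* Main.v *)
Require Import Defs.
From HB Require Import structures.
From mathcomp Require Import all_boot all_order all_algebra.
From mathcomp Require Import reals.
From mathcomp Require Import ring lra zify.
From Stdlib Require Import Lia.

Module P_A.
Import Order.TTheory GRing.Theory Num.Theory.
Set Implicit Arguments. Unset Strict Implicit. Unset Printing Implicit Defensive.
Import Order.TTheory GRing.Theory Num.Theory.

Lemma split_l m n (i : 'I_m) : split (lshift n i) = inl i.
Proof. exact: (unsplitK (inl _)). Qed.
Lemma split_r m n (i : 'I_n) : split (rshift m i) = inr i.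
Proof. exact: (unsplitK (inr _)). Qed.

Definition join_rel m n (eG : rel 'I_m) (eH : rel 'I_n) (a : 'I_m) (r : 'I_n)
  : rel 'I_(m + n) := fun u v =>
  match split u, split v with
  | inl i, inl j => eG i j
  | inr i, inr j => eH i j
  | inl i, inr j => (i == a) && (j == r)
  | inr i, inl j => (j == a) && (i == r)
  end.

Definition joinG (G H : rootedGraph) (a : 'I_(gN G)) (r : 'I_(gN H)) : rootedGraph :=
  @RGraph (gN G + gN H) (join_rel (@gE G) (@gE H) a r) (lshift _ (groot G)).

Section JoinComb.
Variables (m n : nat) (eG : rel 'I_m) (eH : rel 'I_n) (a : 'I_m) (r : 'I_n).
Local Notation J := (join_rel eG eH a r).

Lemma jLL i j : J (lshift n i) (lshift n j) = eG i j.
Proof. by rewrite /join_rel !split_l. Qed.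
Lemma jRR i j : J (rshift m i) (rshift m j) = eH i j.
Proof. by rewrite /join_rel !split_r. Qed.
Lemma jLR i j : J (lshift n i) (rshift m j) = (i == a) && (j == r).
Proof. by rewrite /join_rel split_l split_r. Qed.
Lemma jRL i j : J (rshift m i) (lshift n j) = (j == a) && (i == r).
Proof. by rewrite /join_rel split_l split_r. Qed.

Lemma card_sum (T : finType) (P : pred T) : #|[set x | P x]| = (\sum_x P x)%N.
Proof. by rewrite -sum1dep_card big_mkcond /=; apply: eq_bigr => x _; case: (P x). Qed.

Lemma sum_pairs (T : finType) (F : T -> T -> nat) :
  (\sum_(p : T * T) F p.1 p.2 = \sum_x \sum_y F x y)%N.
Proof. by rewrite pair_bigA. Qed.

Lemma card_join (Q : rel 'I_(m + n)) :
  #|[set p : 'I_(m + n) * 'I_(m + n) | [&& (p.1 < p.2)%N, J p.1 p.2 & Q p.1 p.2]]| =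
  (#|[set p : 'I_m * 'I_m | [&& (p.1 < p.2)%N, eG p.1 p.2 & Q (lshift n p.1) (lshift n p.2)]]|
  + #|[set p : 'I_n * 'I_n | [&& (p.1 < p.2)%N, eH p.1 p.2 & Q (rshift m p.1) (rshift m p.2)]]|
  + Q (lshift n a) (rshift m r))%N.
Proof.
rewrite !card_sum.
rewrite (sum_pairs (fun x y : 'I_(m+n) => [&& (x < y)%N, J x y & Q x y])).
rewrite (sum_pairs (fun x y : 'I_m => [&& (x < y)%N, eG x y & Q (lshift n x) (lshift n y)])).
rewrite (sum_pairs (fun x y : 'I_n => [&& (x < y)%N, eH x y & Q (rshift m x) (rshift m y)])).
rewrite big_split_ord /=.
rewrite (eq_bigr (fun i : 'I_m => (\sum_(j : 'I_m) [&& (i < j)%N, eG i j & Q (lshift n i) (lshift n j)]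
     + (Q (lshift n i) (rshift m r) && (i == a)))%N)); last first.
  move=> i _; rewrite big_split_ord /=; congr (_ + _)%N.
    by apply: eq_bigr => j _; rewrite jLL.
  rewrite (bigD1 r) //= big1 ?addn0.
    rewrite jLR eqxx andbT /= (_ : (i < m + r)%N = true); last first.
      by apply: leq_trans (ltn_ord i) (leq_addr _ _).
    by case: (i == a); case: (Q _ _).
  by move=> j /negbTE nj; rewrite jLR nj andbF andbF.
rewrite (eq_bigr (fun i : 'I_n => \sum_(j : 'I_n) [&& (i < j)%N, eH i j & Q (rshift m i) (rshift m j)])); last first.
  move=> i _; rewrite big_split_ord /= big1 ?add0n.
    by apply: eq_bigr => j _; rewrite jRR ltn_add2l.
  move=> j _; rewrite (_ : (m + i < j)%N = false) //.
  by apply/negbTE; rewrite -leqNgt; apply: leq_trans (ltnW (ltn_ord j)) (leq_addr _ _).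
rewrite big_split /=.
have -> : (\sum_(i < m) Q (lshift n i) (rshift m r) && (i == a))%N = Q (lshift n a) (rshift m r).
  rewrite (bigD1 a) //= eqxx andbT big1 ?addn0 //.
  by move=> i /negbTE ->; rewrite andbF.
by rewrite -!addnA; congr (_ + _)%N; rewrite addnC.
Qed.

Lemma deg_join_l i : deg J (lshift n i) = (deg eG i + (i == a))%N.
Proof.
rewrite /deg !card_sum big_split_ord /=; congr (_ + _)%N.
  by apply: eq_bigr => j _; rewrite jLL.
rewrite (bigD1 r) //= big1 ?addn0; first by rewrite jLR eqxx andbT.
by move=> j /negbTE nj; rewrite jLR nj andbF.
Qed.

Lemma deg_join_r i : deg J (rshift m i) = (deg eH i + (i == r))%N.
Proof.
rewrite /deg !card_sum big_split_ord /= addnC; congr (_ + _)%N.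
  by apply: eq_bigr => j _; rewrite jRR.
rewrite (bigD1 a) //= big1 ?addn0; first by rewrite jRL eqxx /=.
by move=> j /negbTE nj; rewrite jRL nj.
Qed.

End JoinComb.

End P_A.
Import P_A.

Module P_B.
Import Order.TTheory GRing.Theory Num.Theory.
Set Implicit Arguments. Unset Strict Implicit. Unset Printing Implicit Defensive.
Import Order.TTheory GRing.Theory Num.Theory.
Local Open Scope ring_scope.

Section Gibbs2.
Variables (R : realType) (b g lam : R).
Local Notation wt := (weight b g lam).
Definition wE (c c' : bool) : R := if c then (if c' then g else 1) else (if c' then 1 else b).

Variables (G H : rootedGraph) (a : 'I_(gN G)) (r : 'I_(gN H)).
Local Notation JG := (@joinG G H a r).
Definition sl (s : spins JG) : spins G := [ffun i => s (lshift _ i)].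
Definition sr (s : spins JG) : spins H := [ffun i => s (rshift _ i)].
Definition glue (s1 : spins G) (s2 : spins H) : spins JG :=
  [ffun k => match split k with inl i => s1 i | inr j => s2 j end].

Lemma glue_l s1 s2 i : glue s1 s2 (lshift _ i) = s1 i.
Proof. by rewrite ffunE split_l. Qed.
Lemma glue_r s1 s2 i : glue s1 s2 (rshift _ i) = s2 i.
Proof. by rewrite ffunE split_r. Qed.
Lemma slK s1 s2 : sl (glue s1 s2) = s1.
Proof. by apply/ffunP => i; rewrite ffunE glue_l. Qed.
Lemma srK s1 s2 : sr (glue s1 s2) = s2.
Proof. by apply/ffunP => i; rewrite ffunE glue_r. Qed.
Lemma glueK s : glue (sl s) (sr s) = s.
Proof.
apply/ffunP => k; rewrite ffunE; move: (splitK k).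
by case: (split k) => [i|j] /= <-; rewrite ffunE.
Qed.

Lemma sum_spins_join (F : spins JG -> R) :
  \sum_(s : spins JG) F s = \sum_(s1 : spins G) \sum_(s2 : spins H) F (glue s1 s2).
Proof.
rewrite pair_bigA /= (reindex (fun p : spins G * spins H => glue p.1 p.2)) //=.
exists (fun s => (sl s, sr s)) => [[s1 s2] _|s _] /=; first by rewrite slK srK.
exact: glueK.
Qed.

Lemma nones_join s : nones s = (nones (sl s) + nones (sr s))%N.
Proof.
rewrite /nones !card_sum big_split_ord /=; congr (_ + _)%N;
  by apply: eq_bigr => i _; rewrite ffunE.
Qed.

Lemma m0_join s : m0 s = (m0 (sl s) + m0 (sr s) + (~~ s (lshift _ a) && ~~ s (rshift _ r)))%N.
Proof.
rewrite /m0 (card_join _ _ _ _ (fun u v => ~~ s u && ~~ s v)) /=.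
congr (_ + _ + _)%N; apply: eq_card => p; rewrite !inE !ffunE //.
Qed.

Lemma m1_join s : m1 s = (m1 (sl s) + m1 (sr s) + (s (lshift _ a) && s (rshift _ r)))%N.
Proof.
rewrite /m1 (card_join _ _ _ _ (fun u v => s u && s v)) /=.
congr (_ + _ + _)%N; apply: eq_card => p; rewrite !inE !ffunE //.
Qed.

Lemma wt_join s : wt s = wt (sl s) * wt (sr s) * wE (s (lshift _ a)) (s (rshift _ r)).
Proof.
rewrite /weight nones_join m0_join m1_join !exprD.
case: (s (lshift _ a)); case: (s (rshift _ r)); rewrite /wE /= ?expr0 ?expr1; ring.
Qed.

Definition hH c := \sum_(s2 : spins H) wt s2 * wE c (s2 r).
Definition kH c := \sum_(s2 : spins H) wt s2 * (nones s2)%:R * wE c (s2 r).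

Lemma gibbs_join (F : spins G -> R) :
  \sum_(s : spins JG) F (sl s) * wt s = \sum_(s1 : spins G) F s1 * wt s1 * hH (s1 a).
Proof.
rewrite sum_spins_join; apply: eq_bigr => s1 _; rewrite /hH mulr_sumr.
apply: eq_bigr => s2 _; rewrite wt_join slK srK glue_l glue_r; ring.
Qed.

Lemma gibbs_join_n (F : spins G -> R) :
  \sum_(s : spins JG) F (sl s) * wt s * (nones s)%:R =
  \sum_(s1 : spins G) F s1 * wt s1 * ((nones s1)%:R * hH (s1 a) + kH (s1 a)).
Proof.
rewrite sum_spins_join; apply: eq_bigr => s1 _; rewrite /hH /kH !mulr_sumr -big_split /= mulr_sumr.
apply: eq_bigr => s2 _; rewrite wt_join nones_join slK srK glue_l glue_r natrD; ring.
Qed.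

End Gibbs2.

End P_B.
Import P_B.

Module P_C.
Import Order.TTheory GRing.Theory Num.Theory.
Set Implicit Arguments. Unset Strict Implicit. Unset Printing Implicit Defensive.
Import Order.TTheory GRing.Theory Num.Theory.
Local Open Scope ring_scope.

Definition eE : rel 'I_2 := fun u v => u != v.
Definition Egr : rootedGraph := @RGraph 2 eE ord0.
Definition v1 : 'I_2 := @Ordinal 2 1 isT.

Definition e4 : rel 'I_4 := fun u v => let i := nat_of_ord u in let j := nat_of_ord v in
  ((i,j) \in [:: (0,1);(1,0);(1,2);(2,1);(1,3);(3,1);(2,3);(3,2)])%N.
Definition Tri : rootedGraph := @RGraph 4 e4 ord0.

Definition mk2 (c0 c1 : bool) : {ffun 'I_2 -> bool} := [ffun i : 'I_2 => nth false [:: c0; c1] i].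
Definition mk4 (c0 c1 c2 c3 : bool) : {ffun 'I_4 -> bool} :=
  [ffun i : 'I_4 => nth false [:: c0; c1; c2; c3] i].

Lemma sum_ffun2 (R : nmodType) (F : {ffun 'I_2 -> bool} -> R) :
  \sum_s F s = \sum_(c0 : bool) \sum_(c1 : bool) F (mk2 c0 c1).
Proof.
rewrite pair_bigA /= (reindex (fun p : bool * bool => mk2 p.1 p.2)) //=.
exists (fun s => (s ord0, s v1)) => [[c0 c1] _|s _] /=; first by rewrite !ffunE.
by apply/ffunP => -[[|[|k]] Hk]; rewrite ffunE //=; congr (s _); apply: val_inj.
Qed.

Lemma sum_ffun4 (R : nmodType) (F : {ffun 'I_4 -> bool} -> R) :
  \sum_s F s = \sum_(c0 : bool) \sum_(c1 : bool) \sum_(c2 : bool) \sum_(c3 : bool)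
     F (mk4 c0 c1 c2 c3).
Proof.
have -> : \sum_(c0 : bool) \sum_(c1 : bool) \sum_(c2 : bool) \sum_(c3 : bool) F (mk4 c0 c1 c2 c3)
  = \sum_(p : bool * bool * bool * bool) F (mk4 p.1.1.1 p.1.1.2 p.1.2 p.2).
  rewrite -(pair_bigA _ (fun q c3 => F (mk4 q.1.1 q.1.2 q.2 c3))) /=.
  rewrite -(pair_bigA _ (fun q c2 => \sum_(c3 : bool) F (mk4 q.1 q.2 c2 c3))) /=.
  by rewrite -(pair_bigA _ (fun c0 c1 => \sum_(c2 : bool) \sum_(c3 : bool) F (mk4 c0 c1 c2 c3))).
rewrite (reindex (fun p : bool * bool * bool * bool => mk4 p.1.1.1 p.1.1.2 p.1.2 p.2)) //=.
exists (fun s => (s ord0, s (inord 1), s (inord 2), s (inord 3))) =>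
   [[[[c0 c1] c2] c3] _|s _] /=.
  by rewrite !ffunE /= !inordK.
apply/ffunP => -[[|[|[|[|k]]]] Hk]; rewrite ffunE //=; congr (s _); apply: val_inj;
  by rewrite /= ?inordK.
Qed.

Lemma nones_sum T (s : spins T) : nones s = (\sum_(i : 'I_(gN T)) s i)%N.
Proof. by rewrite /nones card_sum. Qed.
Lemma m0_sum T (s : spins T) : m0 s =
  (\sum_(i : 'I_(gN T)) \sum_(j : 'I_(gN T)) [&& (i < j)%N, @gE T i j, ~~ s i & ~~ s j])%N.
Proof. by rewrite /m0 card_sum (sum_pairs (fun i j : 'I_(gN T) => [&& (i < j)%N, @gE T i j, ~~ s i & ~~ s j])). Qed.
Lemma m1_sum T (s : spins T) : m1 s =
  (\sum_(i : 'I_(gN T)) \sum_(j : 'I_(gN T)) [&& (i < j)%N, @gE T i j, s i & s j])%N.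
Proof. by rewrite /m1 card_sum (sum_pairs (fun i j : 'I_(gN T) => [&& (i < j)%N, @gE T i j, s i & s j])). Qed.

Lemma cnt2 c0 c1 : [/\ nones (T:=Egr) (mk2 c0 c1) = (c0 + c1)%N,
  m0 (T:=Egr) (mk2 c0 c1) = (~~ c0 && ~~ c1 : nat) & m1 (T:=Egr) (mk2 c0 c1) = (c0 && c1 : nat)].
Proof.
rewrite nones_sum m0_sum m1_sum !big_ord_recl !big_ord0 !ffunE.
by case: c0; case: c1; vm_compute; split.
Qed.

Lemma cnt4 c0 c1 c2 c3 : [/\ nones (T:=Tri) (mk4 c0 c1 c2 c3) = (c0 + c1 + c2 + c3)%N,
  m0 (T:=Tri) (mk4 c0 c1 c2 c3) = ((~~ c0 && ~~ c1 : nat) + (~~ c1 && ~~ c2 : nat)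
     + (~~ c1 && ~~ c3 : nat) + (~~ c2 && ~~ c3 : nat))%N &
  m1 (T:=Tri) (mk4 c0 c1 c2 c3) = ((c0 && c1 : nat) + (c1 && c2 : nat)
     + (c1 && c3 : nat) + (c2 && c3 : nat))%N].
Proof.
rewrite nones_sum m0_sum m1_sum !big_ord_recl !big_ord0 !ffunE.
by case: c0; case: c1; case: c2; case: c3; vm_compute; split.
Qed.

Section Concrete.
Variables (R : realType) (b g lam : R).
Local Notation wt := (weight b g lam).
Local Notation w := (wE b g).

Lemma wt_E c0 c1 : wt (T:=Egr) (mk2 c0 c1) = lam ^+ (c0 + c1) * w c0 c1.
Proof.
rewrite /weight; have [-> -> ->] := cnt2 c0 c1.
by case: c0; case: c1; rewrite /wE /= ?expr0 ?expr1; ring.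
Qed.

Lemma wt_Tri c0 c1 c2 c3 : wt (T:=Tri) (mk4 c0 c1 c2 c3) =
  lam ^+ (c0 + c1 + c2 + c3) * w c0 c1 * w c1 c2 * w c1 c3 * w c2 c3.
Proof.
rewrite /weight; have [-> -> ->] := cnt4 c0 c1 c2 c3.
by case: c0; case: c1; case: c2; case: c3; rewrite /wE /= ?expr0 ?expr1; ring.
Qed.

Definition Acond (T : rootedGraph) (c : bool) :=
  \sum_(s : spins T | s (groot T) == c) wt s.
Definition Bcond (T : rootedGraph) (c : bool) :=
  \sum_(s : spins T | s (groot T) == c) wt s * (nones s)%:R.

Lemma Zpart_split T : Zpart b g lam T = Acond T true + Acond T false.
Proof.
rewrite /Zpart /Acond (bigID (fun s : spins T => s (groot T))) /=.
by congr (_ + _); apply: eq_bigl => s; case: (s _).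
Qed.

Lemma mu_root_E T c : mu_root b g lam T c = Acond T c / Zpart b g lam T.
Proof. by rewrite /mu_root /Acond mulr_suml. Qed.

Lemma eff_field_E T : Zpart b g lam T != 0 ->
  eff_field b g lam T = lam^-1 * (Acond T true / Acond T false).
Proof.
move=> Z0; rewrite /eff_field !mu_root_E; congr (_ * _).
have [->|A0] := eqVneq (Acond T false) 0; first by rewrite mul0r !invr0 !mulr0.
by field; rewrite A0 Z0.
Qed.

Lemma cond_mag_E T c : Zpart b g lam T != 0 ->
  cond_mag b g lam T c = Bcond T c / Acond T c.
Proof.
move=> Z0; rewrite /cond_mag mu_root_E /Bcond.
rewrite (eq_bigr (fun s => wt s * (nones s)%:R / Zpart b g lam T)); last first.
  by move=> s _; rewrite /mu mulrAC.
rewrite -mulr_suml.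
have [->|A0] := eqVneq (Acond T c) 0; first by rewrite mul0r !invr0 !mulr0.
by field; rewrite A0 Z0.
Qed.

Lemma mag_gap_E T : Zpart b g lam T != 0 ->
  mag_gap b g lam T = Bcond T true / Acond T true - Bcond T false / Acond T false.
Proof. by move=> Z0; rewrite /mag_gap !cond_mag_E. Qed.

Lemma hH_E (H : rootedGraph) c :
  hH b g lam (groot H) c = w c true * Acond H true + w c false * Acond H false.
Proof.
rewrite /hH /Acond (bigID (fun s : spins H => s (groot H))) /= !mulr_sumr.
congr (_ + _); apply: eq_big => [s|s Hs].
- by rewrite eqb_id.
- by rewrite Hs mulrC.
- by rewrite eqbF_neg.
- by rewrite (negbTE Hs) mulrC.
Qed.

Lemma kH_E (H : rootedGraph) c :
  kH b g lam (groot H) c = w c true * Bcond H true + w c false * Bcond H false.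
Proof.
rewrite /kH /Bcond (bigID (fun s : spins H => s (groot H))) /= !mulr_sumr.
congr (_ + _); apply: eq_big => [s|s Hs].
- by rewrite eqb_id.
- by rewrite Hs mulrC.
- by rewrite eqbF_neg.
- by rewrite (negbTE Hs) mulrC.
Qed.

End Concrete.

End P_C.
Import P_C.

Module P_D.
Import Order.TTheory GRing.Theory Num.Theory.
Set Implicit Arguments. Unset Strict Implicit. Unset Printing Implicit Defensive.
Import Order.TTheory GRing.Theory Num.Theory.
Local Open Scope ring_scope.

Definition K1 (T : rootedGraph) : rootedGraph := @joinG Egr T v1 (groot T).
Definition NodeG (T S : rootedGraph) : rootedGraph :=
  @joinG (K1 T) S (lshift (gN T) v1) (groot S).

Lemma m0_zero T (s : spins T) : (forall v, v != groot T -> s v) -> m0 s = 0%N.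
Proof.
move=> Hs; rewrite /m0; apply: eq_card0 => p; rewrite inE.
apply/negP => /and4P [lt _ n1 n2].
have e1 : p.1 = groot T by apply/eqP; apply: contraR n1 => /Hs ->.
have e2 : p.2 = groot T by apply/eqP; apply: contraR n2 => /Hs ->.
by rewrite e1 e2 ltnn in lt.
Qed.

Lemma m1_zero T (s : spins T) : (forall v, v != groot T -> ~~ s v) -> m1 s = 0%N.
Proof.
move=> Hs; rewrite /m1; apply: eq_card0 => p; rewrite inE.
apply/negP => /and4P [lt _ n1 n2].
have e1 : p.1 = groot T by apply/eqP; apply: contraLR n1 => /Hs.
have e2 : p.2 = groot T by apply/eqP; apply: contraLR n2 => /Hs.
by rewrite e1 e2 ltnn in lt.
Qed.

Section Pos.
Variables (R : realType) (b g lam : R).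
Hypotheses (hb : 0 <= b) (hg : 0 <= g) (hbg : b != 0 \/ g != 0) (hl : 0 < lam).
Local Notation wt := (weight b g lam).

Lemma wt_ge0 T (s : spins T) : 0 <= wt s.
Proof. by rewrite /weight !mulr_ge0 // exprn_ge0 // ltW. Qed.

Lemma Acond_gt0 T c : 0 < Acond b g lam T c.
Proof.
pose ss : spins T := [ffun v => if v == groot T then c else (0 < g)].
have Hss : ss (groot T) == c by rewrite ffunE eqxx.
have wpos : 0 < wt ss.
  rewrite /weight; case: (boolP (0 < g)) => gp.
    rewrite m0_zero ?expr0 ?mulr1; last by move=> v /negbTE nv; rewrite ffunE nv.
    by rewrite mulr_gt0 // exprn_gt0.
  have g0 : g = 0 by apply/eqP; rewrite eq_le hg andbT leNgt.
  have bp : 0 < b by case: hbg => h; [rewrite lt_def h hb | move: h; rewrite g0 eqxx].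
  rewrite m1_zero ?expr0 ?mulr1; last by move=> v /negbTE nv; rewrite ffunE nv (negbTE gp).
  by rewrite mulr_gt0 // exprn_gt0.
rewrite /Acond (bigD1 ss) //=.
have : 0 <= \sum_(i : spins T | (i (groot T) == c) && (i != ss)) wt i by apply: sumr_ge0 => i _; exact: wt_ge0.
lra.
Qed.

Lemma Zpart_neq0 T : Zpart b g lam T != 0.
Proof. by rewrite Zpart_split; apply/lt0r_neq0/addr_gt0; exact: Acond_gt0. Qed.

End Pos.

End P_D.
Import P_D.

Module P_E.
Import Order.TTheory GRing.Theory Num.Theory.
Set Implicit Arguments. Unset Strict Implicit. Unset Printing Implicit Defensive.
Import Order.TTheory GRing.Theory Num.Theory.
Local Open Scope ring_scope.

Section NodeComp.
Variables (R : realType) (b g lam : R).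
Local Notation wt := (weight b g lam).
Local Notation w := (wE b g).
Variables (T S : rootedGraph).
Local Notation hT := (hH b g lam (groot T)).
Local Notation hS := (hH b g lam (groot S)).
Local Notation kT := (kH b g lam (groot T)).
Local Notation kS := (kH b g lam (groot S)).

Lemma sum_cond (U : rootedGraph) (P : pred (spins U)) (f : spins U -> R) :
  \sum_(s | P s) f s = \sum_s (P s)%:R * f s.
Proof. by rewrite big_mkcond; apply: eq_bigr => s _; case: (P s); rewrite ?mul1r ?mul0r. Qed.

Lemma A_Node c : Acond b g lam (NodeG T S) c =
  lam ^+ c * (lam * w c true * hT true * hS true + w c false * hT false * hS false).
Proof.
rewrite /Acond sum_cond.
transitivity (\sum_(s1 : spins (K1 T)) (s1 (lshift _ ord0) == c)%:R * wt s1 * hS (s1 (lshift _ v1))).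
  rewrite -(@gibbs_join R b g lam (K1 T) S (lshift (gN T) v1) (groot S)
             (fun s1 : spins (K1 T) => (s1 (lshift _ ord0) == c)%:R)).
  by apply: eq_bigr => s _; rewrite /= ffunE.
transitivity (\sum_(sE : spins Egr) ((sE ord0 == c)%:R * hS (sE v1)) * wt sE * hT (sE v1)).
  rewrite -(@gibbs_join R b g lam Egr T v1 (groot T)
             (fun sE : spins Egr => (sE ord0 == c)%:R * hS (sE v1))).
  by apply: eq_bigr => s _; rewrite /= !ffunE; ring.
rewrite sum_ffun2 !big_bool /= !wt_E !ffunE /=.
by case: c; rewrite /wE /= ?expr0 ?expr1 ?mul0r ?mul1r ?add0r ?addr0; ring.
Qed.

Lemma B_Node c : Bcond b g lam (NodeG T S) c =
  lam ^+ c * (lam * w c true * ((c + 1)%N%:R * hT true * hS true + kT true * hS true + hT true * kS true)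
     + w c false * ((c : nat)%:R * hT false * hS false + kT false * hS false + hT false * kS false)).
Proof.
rewrite /Bcond sum_cond.
transitivity (\sum_(s1 : spins (K1 T)) (s1 (lshift _ ord0) == c)%:R * wt s1 *
   ((nones s1)%:R * hS (s1 (lshift _ v1)) + kS (s1 (lshift _ v1)))).
  rewrite -(@gibbs_join_n R b g lam (K1 T) S (lshift (gN T) v1) (groot S)
             (fun s1 : spins (K1 T) => (s1 (lshift _ ord0) == c)%:R)).
  by apply: eq_bigr => s _; rewrite /= ffunE mulrA.
transitivity (\sum_(s1 : spins (K1 T)) ((s1 (lshift _ ord0) == c)%:R * hS (s1 (lshift _ v1))) * wt s1 * (nones s1)%:R
  + \sum_(s1 : spins (K1 T)) ((s1 (lshift _ ord0) == c)%:R * kS (s1 (lshift _ v1))) * wt s1).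
  by rewrite -big_split /=; apply: eq_bigr => s _; ring.
transitivity (\sum_(sE : spins Egr) ((sE ord0 == c)%:R * hS (sE v1)) * wt sE * ((nones sE)%:R * hT (sE v1) + kT (sE v1))
  + \sum_(sE : spins Egr) ((sE ord0 == c)%:R * kS (sE v1)) * wt sE * hT (sE v1)).
  congr (_ + _).
    rewrite -(@gibbs_join_n R b g lam Egr T v1 (groot T)
             (fun sE : spins Egr => (sE ord0 == c)%:R * hS (sE v1))).
    by apply: eq_bigr => s _; rewrite /= !ffunE.
  rewrite -(@gibbs_join R b g lam Egr T v1 (groot T)
             (fun sE : spins Egr => (sE ord0 == c)%:R * kS (sE v1))).
  by apply: eq_bigr => s _; rewrite /= !ffunE.
rewrite !sum_ffun2 !big_bool /= !wt_E.
have [n1 _ _] := cnt2 true true; have [n2 _ _] := cnt2 true false.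
have [n3 _ _] := cnt2 false true; have [n4 _ _] := cnt2 false false.
rewrite n1 n2 n3 n4 !ffunE /=.
by case: c; rewrite /wE /= ?expr0 ?expr1 ?mul0r ?mul1r ?add0r ?addr0; ring.
Qed.

End NodeComp.

Section ConcreteA.
Variables (R : realType) (b g lam : R).
Local Notation w := (wE b g).

Lemma A_E c : Acond b g lam Egr c = lam ^+ c * (lam * w c true + w c false).
Proof.
rewrite /Acond sum_cond sum_ffun2 !big_bool /= !wt_E !ffunE /=.
by case: c; rewrite /wE /= ?expr0 ?expr1 ?mul0r ?mul1r ?add0r ?addr0; ring.
Qed.

Definition Kt1 := lam ^+ 2 * g ^+ 3 + 2%:R * lam * g + b.
Definition Kt0 := lam ^+ 2 * g + 2%:R * lam * b + b ^+ 3.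

Lemma A_Tri1 : Acond b g lam Tri true = lam * (lam * g * Kt1 + Kt0).
Proof.
rewrite /Acond sum_cond sum_ffun4 !big_bool /= !wt_Tri !ffunE /=.
rewrite /wE /Kt1 /Kt0 /= ?expr0 ?expr1 ?mul0r ?mul1r ?add0r ?addr0; ring.
Qed.

Lemma A_Tri0 : Acond b g lam Tri false = lam * Kt1 + b * Kt0.
Proof.
rewrite /Acond sum_cond sum_ffun4 !big_bool /= !wt_Tri !ffunE /=.
rewrite /wE /Kt1 /Kt0 /= ?expr0 ?expr1 ?mul0r ?mul1r ?add0r ?addr0; ring.
Qed.
End ConcreteA.

End P_E.
Import P_E.

Module P_F.
Import Order.TTheory GRing.Theory Num.Theory.
Set Implicit Arguments. Unset Strict Implicit. Unset Printing Implicit Defensive.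
Import Order.TTheory GRing.Theory Num.Theory.
Local Open Scope ring_scope.

Section Alg.
Variables (R : realType) (l b g hs0 hs1 ks0 ks1 : R).

Definition MNf (p0 p1 q0 q1 : R) :=
  let hT1 := g * p1 + p0 in let hT0 := p1 + b * p0 in
  let kT1 := g * q1 + q0 in let kT0 := q1 + b * q0 in
  let AN1 := l * (l * g * hT1 * hs1 + hT0 * hs0) in
  let AN0 := l * hT1 * hs1 + b * hT0 * hs0 in
  let BN1 := l * (l * g * (2%:R * hT1 * hs1 + kT1 * hs1 + hT1 * ks1) + (hT0 * hs0 + kT0 * hs0 + hT0 * ks0)) in
  let BN0 := l * (hT1 * hs1 + kT1 * hs1 + hT1 * ks1) + b * (kT0 * hs0 + hT0 * ks0) in
  BN1 / AN1 - BN0 / AN0.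

Definition kappa (x : R) :=
  let a1 := l * g * (g * x + 1) * hs1 / (l * g * (g * x + 1) * hs1 + (x + b) * hs0) in
  let a0 := l * (g * x + 1) * hs1 / (l * (g * x + 1) * hs1 + b * (x + b) * hs0) in
  (a1 - a0) * (g * x / (g * x + 1) - x / (x + b)).

Lemma MNf_diff (x p p' q0 q1 q0' q1' : R) :
  0 < l -> 0 <= b -> 0 <= g -> 0 < hs0 -> 0 < hs1 -> 0 < x -> 0 < p -> 0 < p' ->
  MNf p (x * p) q0 q1 - MNf p' (x * p') q0' q1' =
  kappa x * ((q1 / (x * p) - q0 / p) - (q1' / (x * p') - q0' / p')).
Proof.
move=> hl hb hg h0 h1 hx hp hp'.
have gx1 : 0 < g * x + 1 by have := mulr_ge0 hg (ltW hx); lra.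
have xb : 0 < x + b by lra.
have t1 : 0 <= l * g * (g * x + 1) * hs1.
  by apply: mulr_ge0; [apply: mulr_ge0; [apply: mulr_ge0|]|]; lra.
have t2 : 0 < (x + b) * hs0 by apply: mulr_gt0.
have t3 : 0 <= b * (x + b) * hs0 by apply: mulr_ge0; [apply: mulr_ge0|]; lra.
have t4 : 0 < l * (g * x + 1) * hs1 by apply: mulr_gt0; [apply: mulr_gt0|].
have n1 : g * x + 1 != 0 by apply/lt0r_neq0.
have n2 : x + b != 0 by apply/lt0r_neq0.
have n3 : l * g * (g * x + 1) * hs1 + (x + b) * hs0 != 0 by apply/lt0r_neq0; lra.
have n4 : l * (g * x + 1) * hs1 + b * (x + b) * hs0 != 0 by apply/lt0r_neq0; lra.
have np : forall q, 0 < q -> (l * (g * (x * q) + q) * hs1 + b * (x * q + b * q) * hs0 != 0)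
   && (l * g * (g * (x * q) + q) * hs1 + (x * q + b * q) * hs0 != 0).
  move=> q hq; apply/andP; split.
    have -> : l * (g * (x * q) + q) * hs1 + b * (x * q + b * q) * hs0 =
      q * (l * (g * x + 1) * hs1 + b * (x + b) * hs0) by ring.
    by rewrite mulf_neq0 // lt0r_neq0.
  have -> : l * g * (g * (x * q) + q) * hs1 + (x * q + b * q) * hs0 =
      q * (l * g * (g * x + 1) * hs1 + (x + b) * hs0) by ring.
  by rewrite mulf_neq0 // lt0r_neq0.
have /andP[np1 np2] := np _ hp; have /andP[np1' np2'] := np _ hp'.
rewrite /MNf /kappa.
by field; rewrite n1 n2 n3 n4 np1 np2 np1' np2' !lt0r_neq0.
Qed.

Lemma kappa_neq0 x : 0 < l -> 0 <= b -> 0 <= g -> b * g < 1 -> 0 < hs0 -> 0 < hs1 -> 0 < x ->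
  kappa x != 0.
Proof.
move=> hl hb hg hbg h0 h1 hx.
have gx1 : 0 < g * x + 1 by have := mulr_ge0 hg (ltW hx); lra.
have xb : 0 < x + b by lra.
have t1 : 0 <= l * g * (g * x + 1) * hs1.
  by apply: mulr_ge0; [apply: mulr_ge0; [apply: mulr_ge0|]|]; lra.
have t2 : 0 < (x + b) * hs0 by apply: mulr_gt0.
have t3 : 0 <= b * (x + b) * hs0 by apply: mulr_ge0; [apply: mulr_ge0|]; lra.
have t4 : 0 < l * (g * x + 1) * hs1 by apply: mulr_gt0; [apply: mulr_gt0|].
have n1 : g * x + 1 != 0 by apply/lt0r_neq0.
have n2 : x + b != 0 by apply/lt0r_neq0.
have n3 : l * g * (g * x + 1) * hs1 + (x + b) * hs0 != 0 by apply/lt0r_neq0; lra.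
have n4 : l * (g * x + 1) * hs1 + b * (x + b) * hs0 != 0 by apply/lt0r_neq0; lra.
have nbg : b * g - 1 != 0 by rewrite subr_eq0 lt_eqF.
rewrite /kappa.
have fr : forall A B C D : R, B != 0 -> D != 0 -> A / B - C / D = (A * D - C * B) / (B * D).
  by move=> A B C D nB nD; field; rewrite nB nD.
rewrite (fr _ _ _ _ n3 n4) (fr _ _ _ _ n1 n2).
rewrite !mulf_neq0 ?invr_neq0 ?mulf_neq0 //.
  have -> : l * g * (g * x + 1) * hs1 * (l * (g * x + 1) * hs1 + b * (x + b) * hs0) -
       l * (g * x + 1) * hs1 * (l * g * (g * x + 1) * hs1 + (x + b) * hs0) =
       (l * (g * x + 1) * hs1) * ((x + b) * hs0) * (b * g - 1) by ring.
  by rewrite !mulf_neq0 // ?lt0r_neq0.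
have -> : g * x * (x + b) - x * (g * x + 1) = x * (b * g - 1) by ring.
by rewrite !mulf_neq0 // ?lt0r_neq0.
Qed.
End Alg.

End P_F.
Import P_F.

Module P_G.
Import Order.TTheory GRing.Theory Num.Theory.
Set Implicit Arguments. Unset Strict Implicit. Unset Printing Implicit Defensive.
Import Order.TTheory GRing.Theory Num.Theory.
Local Open Scope ring_scope.

Section Dyn.
Variables (R : realType) (b g lam : R).
Hypotheses (hb : 0 <= b) (hg : 0 <= g) (hbg1 : b * g < 1) (hbg : b != 0 \/ g != 0) (hl : 0 < lam).

Local Ltac ctx := have hb0 := hb; have hg0 := hg; have hl0 := hl; have hbg0 := hbg1.

Definition phi (x : R) := (g * x + 1) / (x + b).
Definition Psi (u : R) := lam * (lam * g * u + 1) / (lam * u + b).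
Definition XX (T : rootedGraph) := Acond b g lam T true / Acond b g lam T false.

Lemma phi_gt0 (x : R) : 0 < x -> 0 < phi x.
Proof.
ctx; move=> hx; rewrite /phi; apply: divr_gt0; last by lra.
by have := mulr_ge0 hg (ltW hx); lra.
Qed.

Lemma phi_lt (x y : R) : 0 < x -> x < y -> phi y < phi x.
Proof.
ctx; move=> hx hxy.
have xb : x + b != 0 by apply/lt0r_neq0; lra.
have yb : y + b != 0 by apply/lt0r_neq0; lra.
have e : phi x - phi y = (y - x) * (1 - g * b) / ((x + b) * (y + b)).
  by rewrite /phi; field; rewrite xb yb.
have : 0 < (y - x) * (1 - g * b) / ((x + b) * (y + b)).
  apply: divr_gt0; first by apply: mulr_gt0; lra.
  by apply: mulr_gt0; lra.
lra.
Qed.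

Lemma Psi_lt (u v : R) : 0 < u -> u < v -> Psi v < Psi u.
Proof.
ctx; move=> hu huv.
have ub : lam * u + b != 0 by apply/lt0r_neq0; have := mulr_gt0 hl hu; lra.
have vb : lam * v + b != 0 by apply/lt0r_neq0; have := mulr_gt0 hl (lt_trans hu huv); lra.
have e : Psi u - Psi v = lam * lam * (v - u) * (1 - g * b) / ((lam * u + b) * (lam * v + b)).
  by rewrite /Psi; field; rewrite ub vb.
have : 0 < lam * lam * (v - u) * (1 - g * b) / ((lam * u + b) * (lam * v + b)).
  apply: divr_gt0; first by apply: mulr_gt0; [apply: mulr_gt0; [apply: mulr_gt0|]|]; lra.
  apply: mulr_gt0.
    by have := mulr_gt0 hl hu; lra.
  by have := mulr_gt0 hl (lt_trans hu huv); lra.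
lra.
Qed.

Lemma phi_inj (x y : R) : 0 < x -> 0 < y -> phi x = phi y -> x = y.
Proof.
ctx; move=> hx hy e; case: (ltgtP x y) => // h.
  by have := phi_lt hx h; rewrite e ltxx.
by have := phi_lt hy h; rewrite e ltxx.
Qed.

Lemma Psi_inj (x y : R) : 0 < x -> 0 < y -> Psi x = Psi y -> x = y.
Proof.
ctx; move=> hx hy e; case: (ltgtP x y) => // h.
  by have := Psi_lt hx h; rewrite e ltxx.
by have := Psi_lt hy h; rewrite e ltxx.
Qed.

Lemma Psi_gt0 (u : R) : 0 < u -> 0 < Psi u.
Proof.
ctx; move=> hu; rewrite /Psi divr_gt0 //.
  apply: mulr_gt0 => //; have : 0 <= lam * g * u by rewrite !mulr_ge0 // ltW.
  lra.
by have := mulr_gt0 hl hu; lra.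
Qed.

Lemma alg_X (p1 p0 s1 s0 : R) : 0 < p1 -> 0 < p0 -> 0 < s1 -> 0 < s0 ->
  lam * (lam * g * (g * p1 + p0) * (g * s1 + s0) + (p1 + b * p0) * (s1 + b * s0)) /
  (lam * (g * p1 + p0) * (g * s1 + s0) + b * (p1 + b * p0) * (s1 + b * s0))
  = Psi (phi (p1 / p0) * phi (s1 / s0)).
Proof.
ctx; move=> h1 h0 k1 k0.
have q1 : 0 < p1 / p0 by apply: divr_gt0.
have q2 : 0 < s1 / s0 by apply: divr_gt0.
have pp := phi_gt0 q1; have pq := phi_gt0 q2.
have n1 : p1 / p0 + b != 0 by apply/lt0r_neq0; lra.
have n2 : s1 / s0 + b != 0 by apply/lt0r_neq0; lra.
have n3 : lam * (phi (p1 / p0) * phi (s1 / s0)) + b != 0.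
  by apply/lt0r_neq0; have := mulr_gt0 hl (mulr_gt0 pp pq); lra.
have pp0 : 0 < p1 + b * p0 by have := mulr_ge0 hb (ltW h0); lra.
have ss0 : 0 < s1 + b * s0 by have := mulr_ge0 hb (ltW k0); lra.
have n4 : p1 + b * p0 != 0 by apply/lt0r_neq0.
have n5 : s1 + b * s0 != 0 by apply/lt0r_neq0.
have e1 : phi (p1 / p0) = (g * p1 + p0) / (p1 + b * p0).
  by rewrite /phi; field; apply/andP; split; [exact: n4 | exact: lt0r_neq0].
have e2 : phi (s1 / s0) = (g * s1 + s0) / (s1 + b * s0).
  by rewrite /phi; field; apply/andP; split; [exact: n5 | exact: lt0r_neq0].
move: n3; rewrite /Psi e1 e2 => n3.
have n6 : lam * (g * p1 + p0) * (g * s1 + s0) + b * (p1 + b * p0) * (s1 + b * s0) != 0.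
  apply/lt0r_neq0; have : 0 <= b * (p1 + b * p0) * (s1 + b * s0).
    by apply: mulr_ge0; [apply: mulr_ge0|]; lra.
  have : 0 < lam * (g * p1 + p0) * (g * s1 + s0).
    have gp1 : 0 < g * p1 + p0 by have := mulr_ge0 hg (ltW h1); lra.
    have gs1 : 0 < g * s1 + s0 by have := mulr_ge0 hg (ltW k1); lra.
    by apply: mulr_gt0; [apply: mulr_gt0|].
  lra.
field; apply/and3P; split => //.
by rewrite !mulrA.
Qed.

End Dyn.

End P_G.
Import P_G.

Module P_H.
Import Order.TTheory GRing.Theory Num.Theory.
Set Implicit Arguments. Unset Strict Implicit. Unset Printing Implicit Defensive.
Import Order.TTheory GRing.Theory Num.Theory.
Local Open Scope ring_scope.

Section Graphs.
Variables (R : realType) (b g lam : R).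
Hypotheses (hb : 0 <= b) (hg : 0 <= g) (hbg1 : b * g < 1) (hbg : b != 0 \/ g != 0) (hl : 0 < lam).
Local Ltac ctx := have hb0 := hb; have hg0 := hg; have hl0 := hl; have hbg0 := hbg1.
Local Notation A := (Acond b g lam).
Local Notation B := (Bcond b g lam).

Lemma Apos T c : 0 < A T c. Proof. exact: Acond_gt0. Qed.

Lemma XX_gt0 T : 0 < XX b g lam T.
Proof. by rewrite /XX divr_gt0 // Apos. Qed.

Lemma eff_XX T : eff_field b g lam T = lam^-1 * XX b g lam T.
Proof. by rewrite eff_field_E // Zpart_neq0. Qed.

Lemma X_Node T S : XX b g lam (NodeG T S) = Psi b g lam (phi b g (XX b g lam T) * phi b g (XX b g lam S)).
Proof.
ctx.
rewrite /XX -alg_X // ?Apos // !A_Node !hH_E /wE /= expr1 expr0 !mul1r.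
congr (_ / _); ring.
Qed.

Lemma mag_Node T S : mag_gap b g lam (NodeG T S) =
  MNf lam b g (hH b g lam (groot S) false) (hH b g lam (groot S) true)
      (kH b g lam (groot S) false) (kH b g lam (groot S) true)
      (A T false) (A T true) (B T false) (B T true).
Proof.
rewrite mag_gap_E ?Zpart_neq0 // !A_Node !B_Node !hH_E !kH_E /wE /MNf /= expr1 expr0 !mul1r.
by congr (_ / _ - _ / _); ring.
Qed.

Lemma hS_gt0 S c : 0 < hH b g lam (groot S) c.
Proof.
ctx; rewrite hH_E /wE; have a1 := Apos S true; have a0 := Apos S false.
case: c.
  by have := mulr_ge0 hg (ltW a1); lra.
by have := mulr_ge0 hb (ltW a0); lra.
Qed.

Lemma Node_mag_diff T1 T2 S : XX b g lam T1 = XX b g lam T2 ->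
  mag_gap b g lam (NodeG T1 S) - mag_gap b g lam (NodeG T2 S) =
  kappa lam b g (hH b g lam (groot S) false) (hH b g lam (groot S) true) (XX b g lam T1)
   * (mag_gap b g lam T1 - mag_gap b g lam T2).
Proof.
ctx => eX.
have e1 : A T1 true = XX b g lam T1 * A T1 false.
  by rewrite /XX mulrAC -mulrA divff ?mulr1 // lt0r_neq0 // Apos.
have e2 : A T2 true = XX b g lam T1 * A T2 false.
  by rewrite eX /XX mulrAC -mulrA divff ?mulr1 // lt0r_neq0 // Apos.
rewrite !mag_Node !mag_gap_E ?Zpart_neq0 // e1 e2 MNf_diff //.
- exact: hS_gt0.
- exact: hS_gt0.
- exact: XX_gt0.
- exact: Apos.
- exact: Apos.
Qed.

Lemma kappa_Node_neq0 T S : kappa lam b g (hH b g lam (groot S) false) (hH b g lam (groot S) true) (XX b g lam T) != 0.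
Proof. by ctx; rewrite kappa_neq0 // ?hS_gt0 // XX_gt0. Qed.

End Graphs.

End P_H.
Import P_H.

Module P_I.
Import Order.TTheory GRing.Theory Num.Theory.
Set Implicit Arguments. Unset Strict Implicit. Unset Printing Implicit Defensive.

Lemma card_split m n (P : pred 'I_(m + n)) :
  #|[set x | P x]| = (#|[set i | P (lshift n i)]| + #|[set j | P (rshift m j)]|)%N.
Proof. by rewrite !card_sum big_split_ord. Qed.

Lemma deg_eq k (e e' : rel 'I_k) v : e =2 e' -> deg e v = deg e' v.
Proof. by move=> ee; apply: eq_card => u; rewrite !inE ee. Qed.

Lemma nedges_eq k (e e' : rel 'I_k) : e =2 e' -> nedges e = nedges e'.
Proof. by move=> ee; apply: eq_card => p; rewrite !inE ee. Qed.

Lemma nedges_join m n (eG : rel 'I_m) (eH : rel 'I_n) a r :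
  nedges (join_rel eG eH a r) = (nedges eG + nedges eH + 1)%N.
Proof.
have ne : forall k (e : rel 'I_k), nedges e =
    #|[set p : 'I_k * 'I_k | [&& (p.1 < p.2)%N, e p.1 p.2 & (fun _ _ => true) p.1 p.2]]|.
  by move=> k e; apply: eq_card => p; rewrite !inE andbT.
rewrite ne (card_join _ _ _ _ (fun _ _ => true)) /=.
by congr (_ + _ + _)%N; apply: eq_card => p; rewrite !inE andbT.
Qed.

Lemma connect_map k k' (e : rel 'I_k) (e' : rel 'I_k') (f : 'I_k -> 'I_k') :
  (forall x y, e x y -> e' (f x) (f y)) -> forall x y, connect e x y -> connect e' (f x) (f y).
Proof.
move=> hf x y /connectP [p]; elim: p x => [|z p IH] x /=.
  by move=> _ ->; exact: connect0.
case/andP => exz pz ey.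
exact: connect_trans (connect1 (hf _ _ exz)) (IH z pz ey).
Qed.

Lemma lshift_inj' m n : injective (@lshift m n).
Proof. by move=> i j /(congr1 val) /= /val_inj. Qed.
Lemma rshift_inj' m n : injective (@rshift m n).
Proof. by move=> i j /(congr1 val) /= /addnI /val_inj. Qed.
Lemma lr_neq m n (i : 'I_m) (j : 'I_n) : lshift n i != rshift m j.
Proof.
apply/eqP => /(congr1 val) /= e.
by have := ltn_ord i; rewrite e ltnNge leq_addr.
Qed.

Section JoinStruct.
Variables (m n : nat) (eG : rel 'I_m) (eH : rel 'I_n) (a : 'I_m) (r : 'I_n).
Variables (rG : 'I_m) (XG : {set 'I_m}) (XH : {set 'I_n}).
Local Notation eJ := (join_rel eG eH a r).
Definition XJ : {set 'I_(m + n)} :=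
  [set x | match split x with inl i => i \in XG | inr j => j \in XH end].

Lemma inXJ_l i : (lshift n i \in XJ) = (i \in XG).
Proof. by rewrite inE split_l. Qed.
Lemma inXJ_r i : (rshift m i \in XJ) = (i \in XH).
Proof. by rewrite inE split_r. Qed.

Hypotheses (aX : a \notin XG) (rX : r \notin XH).

Lemma off_join : induced_off eJ XJ =2 join_rel (induced_off eG XG) (induced_off eH XH) a r.
Proof.
move=> u v; rewrite -(splitK u) -(splitK v).
case: (split u) => i; case: (split v) => j /=;
  rewrite /induced_off /= ?jLL ?jRR ?jLR ?jRL ?inXJ_l ?inXJ_r //.
  by case: eqP => [->|] //=; case: eqP => [->|] //=; rewrite aX rX.
by case: eqP => [->|] //=; case: eqP => [->|] //=; rewrite aX rX.
Qed.

Lemma simple_join : simple_graph eG -> simple_graph eH -> simple_graph eJ.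
Proof.
move=> [sG iG] [sH iH]; split.
  move=> u v; rewrite -(splitK u) -(splitK v).
  case: (split u) => i; case: (split v) => j /=; rewrite ?jLL ?jRR ?jLR ?jRL //.
move=> u; rewrite -(splitK u); case: (split u) => i /=; rewrite ?jLL ?jRR //.
Qed.

Lemma tree_join : rG \notin XG -> is_tree_off eG XG -> is_tree_off eH XH -> is_tree_off eJ XJ.
Proof.
move=> rGX [cG nG] [cH nH]; split.
  have cl : forall i j, i \notin XG -> j \notin XG ->
      connect (induced_off eJ XJ) (lshift n i) (lshift n j).
    move=> i j hi hj; apply: (connect_map (e := induced_off eG XG)) => [x y|]; last exact: cG.
    by rewrite off_join jLL.
  have cr : forall i j, i \notin XH -> j \notin XH ->
      connect (induced_off eJ XJ) (rshift m i) (rshift m j).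
    move=> i j hi hj; apply: (connect_map (e := induced_off eH XH)) => [x y|]; last exact: cH.
    by rewrite off_join jRR.
  move=> u v; rewrite -(splitK u) -(splitK v).
  case: (split u) => i; case: (split v) => j /=; rewrite ?inXJ_l ?inXJ_r => hi hj.
  - exact: cl.
  - apply: connect_trans (cl _ _ hi aX) _.
    apply: connect_trans (connect1 _) (cr _ _ rX hj).
    by rewrite off_join jLR !eqxx.
  - apply: connect_trans (cr _ _ hi rX) _.
    apply: connect_trans (connect1 _) (cl _ _ aX hj).
    by rewrite off_join jRL !eqxx.
  - exact: cr.
rewrite (nedges_eq off_join) nedges_join nG nH.
have -> : #|~: XJ| = (#|~: XG| + #|~: XH|)%N.
  rewrite (_ : ~: XJ = [set x | x \notin XJ]); last by apply/setP => x; rewrite !inE.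
  by rewrite card_split; congr (_ + _)%N; apply: eq_card => x; rewrite !inE ?split_l ?split_r.
have h1 : (0 < #|~: XG|)%N by apply/card_gt0P; exists rG; rewrite inE.
have h2 : (0 < #|~: XH|)%N by apply/card_gt0P; exists r; rewrite inE.
lia.
Qed.

Lemma count_join_l i : #|[set x in XJ | eJ (lshift n i) x]| = #|[set x in XG | eG i x]|.
Proof.
rewrite card_split; rewrite [X in (_ + X)%N](_ : _ = 0%N) ?addn0.
  by apply: eq_card => x; rewrite !inE split_l jLL.
apply: eq_card0 => x; rewrite !inE split_r jLR.
by apply/negP => /andP [xX /andP [_ /eqP xr]]; move: xX; rewrite xr (negbTE rX).
Qed.

Lemma count_join_r i : #|[set x in XJ | eJ (rshift m i) x]| = #|[set x in XH | eH i x]|.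
Proof.
rewrite card_split; rewrite [X in (X + _)%N](_ : _ = 0%N) ?add0n.
  by apply: eq_card => x; rewrite !inE split_r jRR.
apply: eq_card0 => x; rewrite !inE split_l jRL.
by apply/negP => /andP [xX /andP [/eqP xa _]]; move: xX; rewrite xa (negbTE aX).
Qed.

Lemma tri_join : simple_graph eG -> #|[set x in XG | eG a x]| = 0%N ->
  triangles_on_leaves eG rG XG -> triangles_on_leaves eH r XH ->
  triangles_on_leaves eJ (lshift n rG) XJ.
Proof.
move=> [sG _] a0 [tG1 tG2] [tH1 tH2]; split; last first.
  move=> y; rewrite -(splitK y); case: (split y) => i /=; rewrite ?inXJ_l ?inXJ_r => hi.
    by rewrite count_join_l; apply: tG2.
  by rewrite count_join_r; apply: tH2.
move=> x; rewrite -(splitK x); case: (split x) => i /=; rewrite ?inXJ_l ?inXJ_r => hi.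
  have [dG [y [x' [yX x'X x'x yr [e1 e2 e3 dy]]]]] := tG1 i hi.
  have ia : (i == a) = false by apply/negbTE; apply: contraNneq aX => <-.
  have ya : (y == a) = false.
    apply/negbTE; apply/eqP => ya; move: a0; rewrite -ya => /eqP.
    by rewrite cards_eq0 => /eqP /setP /(_ i); rewrite !inE hi sG e1.
  split; first by rewrite deg_join_l dG ia.
  exists (lshift n y), (lshift n x'); split.
  - by rewrite inXJ_l.
  - by rewrite inXJ_l.
  - by apply: contra x'x => /eqP /lshift_inj' ->.
  - by apply: contra yr => /eqP /lshift_inj' ->.
  - split; rewrite ?jLL //.
    by rewrite (deg_eq _ off_join) deg_join_l dy ya.
have [dH [y [x' [yX x'X x'x yr [e1 e2 e3 dy]]]]] := tH1 i hi.
have ir : (i == r) = false by apply/negbTE; apply: contraNneq rX => <-.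
split; first by rewrite deg_join_r dH ir.
exists (rshift m y), (rshift m x'); split.
- by rewrite inXJ_r.
- by rewrite inXJ_r.
- by apply: contra x'x => /eqP /rshift_inj' ->.
- by rewrite eq_sym lr_neq.
- split; rewrite ?jRR //.
  by rewrite (deg_eq _ off_join) deg_join_r dy (negbTE yr).
Qed.

End JoinStruct.

End P_I.
Import P_I.

Module P_J.
Import Order.TTheory GRing.Theory Num.Theory.
Set Implicit Arguments. Unset Strict Implicit. Unset Printing Implicit Defensive.
Import Order.TTheory GRing.Theory Num.Theory.

Lemma simple_E : simple_graph eE.
Proof. by split => [u v|u]; rewrite /eE ?eqxx // eq_sym. Qed.

Lemma deg_E u : deg eE u = 1%N.
Proof.
rewrite /deg card_sum !big_ord_recl big_ord0.
by case: u => [[|[|k]] Hu] //; vm_compute.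
Qed.

Lemma tree_E : is_tree_off eE set0.
Proof.
split.
  move=> u v _ _; case: (eqVneq u v) => [->|nuv]; first exact: connect0.
  by apply: connect1; rewrite /induced_off /= !in_set0 andbT; exact: nuv.
rewrite /nedges card_sum (sum_pairs (fun i j : 'I_2 => (i < j)%N && induced_off eE set0 i j)).
rewrite !big_ord_recl !big_ord0 /induced_off /= !in_set0 setC0 cardsT card_ord.
by vm_compute.
Qed.

Lemma tri_E : triangles_on_leaves eE ord0 set0.
Proof.
split; first by move=> x; rewrite in_set0.
move=> y _; rewrite (_ : #|_| = 0%N) //.
by apply: eq_card0 => x; rewrite !inE.
Qed.

Section NodeStruct.
Variables (R : realType) (b g lam : R).
Variables (T S : rootedGraph).

Lemma Node_gadget : is_field_gadget b g lam T -> is_field_gadget b g lam S ->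
  is_field_gadget b g lam (NodeG T S).
Proof.
move=> [sT [XT [rT dT tT trT cT]]] [sS [XS [rS dS tS trS cS]]].
have v1X : v1 \notin (set0 : {set 'I_2}) by rewrite in_set0.
have o0X : ord0 \notin (set0 : {set 'I_2}) by rewrite in_set0.
pose XK := XJ (set0 : {set 'I_2}) XT.
have sK : simple_graph (@gE (K1 T)) by apply: simple_join => //; exact: simple_E.
have tK : is_tree_off (@gE (K1 T)) XK by apply: (tree_join (rG := ord0)) => //; exact: tree_E.
have trK : triangles_on_leaves (@gE (K1 T)) (groot (K1 T)) XK.
  apply: tri_join => //; first exact: simple_E.
    by apply: eq_card0 => x; rewrite !inE.
  exact: tri_E.
have aX : lshift (gN T) v1 \notin XK by rewrite inXJ_l.
have a0 : #|[set x in XK | @gE (K1 T) (lshift (gN T) v1) x]| = 0%N.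
  rewrite count_join_l //; by apply: eq_card0 => x; rewrite !inE.
have rK : groot (K1 T) \notin XK by rewrite /= inXJ_l.
split; first by apply: simple_join.
exists (XJ XK XS); split.
- by rewrite /= inXJ_l.
- by rewrite /= (deg_join_l (@gE (K1 T))) (deg_join_l eE) deg_E.
- by apply: (tree_join (rG := groot (K1 T))).
- by apply: tri_join.
- move=> /set0Pn [x]; rewrite -(splitK x); case: (split x) => i /=.
    rewrite inXJ_l -(splitK i); case: (split i) => j /=; first by rewrite inXJ_l in_set0.
    by rewrite inXJ_r => jX; apply: cT; apply/set0Pn; exists j.
  by rewrite inXJ_r => jX; apply: cS; apply/set0Pn; exists i.
Qed.

Lemma deg_root_gadget U : is_field_gadget b g lam U -> deg (@gE U) (groot U) = 1%N.
Proof. by move=> [_ [X [_ d _ _ _]]]. Qed.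

Lemma Node_maxdeg D : (3 <= D)%N -> is_field_gadget b g lam T -> is_field_gadget b g lam S ->
  maxdeg_le T D -> maxdeg_le S D -> maxdeg_le (NodeG T S) D.
Proof.
move=> D3 gT gS mT mS v; rewrite -(splitK v); case: (split v) => i /=.
  rewrite (deg_join_l (@gE (K1 T))) -(splitK i); case: (split i) => j /=.
    rewrite (deg_join_l eE) deg_E.
    have : (lshift (gN T) j == lshift (gN T) v1) = (j == v1).
      by apply/eqP/eqP => [/lshift_inj'|->].
    move=> ->; case: (j == v1); lia.
  rewrite (deg_join_r eE).
  case: (eqVneq j (groot T)) => [->|nj].
    by rewrite deg_root_gadget //; apply: leq_trans D3.
  by rewrite /= ?addn0; apply: mT.
rewrite (deg_join_r (@gE (K1 T))).
case: (eqVneq i (groot S)) => [->|ni].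
  by rewrite deg_root_gadget //; apply: leq_trans D3.
by rewrite /= ?addn0; apply: mS.
Qed.

End NodeStruct.

End P_J.
Import P_J.

Module P_K.
Import Order.TTheory GRing.Theory Num.Theory.
Set Implicit Arguments. Unset Strict Implicit. Unset Printing Implicit Defensive.
Import Order.TTheory GRing.Theory Num.Theory.

Definition X3 : {set 'I_4} := [set x : 'I_4 | (1 < x)%N].

Lemma simple_Tri : simple_graph e4.
Proof.
split.
  by move=> [[|[|[|[|k]]]] Hu] [[|[|[|[|l]]]] Hv].
by move=> [[|[|[|[|k]]]] Hu].
Qed.

Lemma deg_Tri u : (deg e4 u <= 3)%N.
Proof.
rewrite /deg card_sum !big_ord_recl big_ord0.
by case: u => [[|[|[|[|k]]]] Hu] //; vm_compute.
Qed.

Lemma deg_Tri0 : deg e4 ord0 = 1%N.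
Proof. by rewrite /deg card_sum !big_ord_recl big_ord0; vm_compute. Qed.

Lemma tree_Tri : is_tree_off e4 X3.
Proof.
split.
  have c0 : forall u, u \notin X3 -> connect (induced_off e4 X3) u ord0 /\ connect (induced_off e4 X3) ord0 u.
    move=> u; rewrite inE -leqNgt; case: u => [[|[|k]] Hu] //= _.
      by rewrite (_ : Ordinal Hu = ord0) ?connect0 //; apply: val_inj.
    by split; apply: connect1; rewrite /induced_off /= !inE.
  move=> u v hu hv; apply: connect_trans (proj1 (c0 u hu)) (proj2 (c0 v hv)).
rewrite /nedges card_sum (sum_pairs (fun i j : 'I_4 => (i < j)%N && induced_off e4 X3 i j)).
rewrite !big_ord_recl !big_ord0 /induced_off /= !inE card_sum !big_ord_recl big_ord0 !inE.
by vm_compute.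
Qed.

Ltac cardx := rewrite /deg ?card_sum !big_ord_recl big_ord0 /induced_off /= ?inE; vm_compute.

Lemma tri_Tri : triangles_on_leaves e4 ord0 X3.
Proof.
split.
  move=> [[|[|[|[|k]]]] Hx] //; rewrite inE //= => _.
    split; first by cardx.
    exists (@Ordinal 4 1 isT), (@Ordinal 4 3 isT); split; rewrite ?inE //; try by rewrite -val_eqE.
    by split; [vm_compute | vm_compute | vm_compute | cardx].
  split; first by cardx.
  exists (@Ordinal 4 1 isT), (@Ordinal 4 2 isT); split; rewrite ?inE //; try by rewrite -val_eqE.
  by split; [vm_compute | vm_compute | vm_compute | cardx].
move=> [[|[|k]] Hy]; rewrite inE //= => _; by rewrite card_sum !big_ord_recl big_ord0 !inE; vm_compute.
Qed.

Section TriG.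
Local Open Scope ring_scope.
Variables (R : realType) (b g lam : R).
Lemma Tri_gadget : lam = (1 - b) / (1 - g) /\ b <> g -> is_field_gadget b g lam Tri.
Proof.
move=> cnd; split; first exact: simple_Tri.
exists X3; split => //.
- by rewrite inE.
- exact: deg_Tri0.
- exact: tree_Tri.
- exact: tri_Tri.
Qed.

Lemma Tri_maxdeg D : (3 <= D)%N -> maxdeg_le Tri D.
Proof. by move=> D3 v; apply: leq_trans (deg_Tri v) D3. Qed.

Lemma E_gadget : is_field_gadget b g lam Egr.
Proof.
split; first exact: simple_E.
exists set0; split => //.
- by rewrite in_set0.
- exact: deg_E.
- exact: tree_E.
- exact: tri_E.
- by rewrite eqxx.
Qed.

Lemma E_maxdeg D : (3 <= D)%N -> maxdeg_le Egr D.
Proof. by move=> D3 v; rewrite /= deg_E; apply: leq_trans D3. Qed.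
End TriG.

End P_K.
Import P_K.

Module P_L.
Import Order.TTheory GRing.Theory Num.Theory.
Set Implicit Arguments. Unset Strict Implicit. Unset Printing Implicit Defensive.
Import Order.TTheory GRing.Theory Num.Theory.
Local Open Scope ring_scope.

Section Final.
Variables (R : realType) (b g lam : R).
Hypotheses (hb : 0 <= b) (hg : 0 <= g) (hbg1 : b * g < 1) (hbg : b != 0 \/ g != 0) (hl : 0 < lam).
Hypothesis hnot : ~ (b = g /\ lam = 1).
Local Ltac ctx := have hb0 := hb; have hg0 := hg; have hl0 := hl; have hbg0 := hbg1.
Local Notation X := (XX b g lam).

Lemma XE : X Egr = lam * (lam * g + 1) / (lam + b).
Proof. by rewrite /XX !A_E /wE /= expr1 expr0 mul1r mulr1. Qed.

Lemma XE_Psi : X Egr = Psi b g lam 1.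
Proof. by rewrite XE /Psi !mulr1. Qed.

Lemma glb : 0 < g * lam + b.
Proof.
ctx; case: hbg => h.
  have : 0 < b by rewrite lt_def h hb.
  by have := mulr_ge0 hg (ltW hl); lra.
have : 0 < g by rewrite lt_def h hg.
by move=> gp; have := mulr_gt0 gp hl; lra.
Qed.

Lemma two_cands D : (3 <= D)%N -> exists S1 S2,
  [/\ is_field_gadget b g lam S1 /\ is_field_gadget b g lam S2,
      maxdeg_le S1 D /\ maxdeg_le S2 D & X S1 != X S2].
Proof.
ctx => D3.
have phiP := phi_gt0 hb hg hbg1 hl.
have hgl := glb.
case: (eqVneq (g * lam + 1) (lam + b)) => tri; last first.
  exists Egr, (NodeG Egr Egr); split.
  - by split; [exact: E_gadget | apply: Node_gadget; exact: E_gadget].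
  - by split; [exact: E_maxdeg | apply: (Node_maxdeg (b:=b) (g:=g) (lam:=lam)) => //; [exact: E_gadget|exact: E_gadget|exact: E_maxdeg|exact: E_maxdeg]].
  apply/eqP; rewrite (X_Node hb hg hbg1 hbg hl) {1}XE_Psi => eP.
  have xp : 0 < X Egr by exact: XX_gt0.
  have pp : 0 < phi b g (X Egr) := phiP _ xp.
  have e1 := esym (Psi_inj hb hg hbg1 hl ltr01 (mulr_gt0 pp pp) eP).
  have p1 : phi b g (X Egr) = 1.
    move: e1 pp; set p := phi b g (X Egr) => e1 pp.
    have : (p - 1) * (p + 1) = 0.
      have -> : (p - 1) * (p + 1) = p * p - 1 by ring.
      by rewrite e1 subrr.
    move/eqP; rewrite mulf_eq0 => /orP [/eqP|/eqP]; first by move=> h; lra.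
    by move=> h; lra.
  set a := phi b g lam.
  have lb : lam + b != 0 by apply/lt0r_neq0; lra.
  have ea : X Egr = lam * a by rewrite XE /a /phi; field; rewrite lb.
  have eq1 : a * (lam + b) = g * lam + 1.
    by rewrite /a /phi; field; rewrite lb.
  have eq2 : g * lam * a + 1 = lam * a + b.
    have lab : lam * a + b != 0 by apply/lt0r_neq0; have := mulr_gt0 hl (phiP _ hl); rewrite -/a; lra.
    move: p1; rewrite ea /phi => p1.
    have := congr1 (fun t => t * (lam * a + b)) p1; rewrite /= divfK // mul1r => <-; ring.
  have : (a - 1) * (g * lam + b) = 0.
    have -> : (a - 1) * (g * lam + b) = (g * lam * a + 1 - (lam * a + b)) + (a * (lam + b) - (g * lam + 1)) by ring.
    by rewrite eq1 eq2 !subrr addr0.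
  move/eqP; rewrite mulf_eq0 (gt_eqF hgl) orbF subr_eq0 => /eqP a1.
  by move: tri; rewrite -eq1 a1 mul1r eqxx.
have b1 : b != 1.
  apply/eqP => b1; move: tri; rewrite b1 => tri.
  have g1 : g = 1.
    have : lam * (g - 1) = 0 by rewrite mulrBr mulr1 mulrC; lra.
    by move/eqP; rewrite mulf_eq0 (gt_eqF hl) subr_eq0 => /eqP.
  by move: hbg1; rewrite b1 g1 mulr1 ltxx.
have g1 : g != 1.
  apply/eqP => g1; move: tri; rewrite g1 mul1r => tri.
  by move/eqP: b1; apply; lra.
have bng : b <> g.
  move=> bg; apply: hnot; split => //.
  move: tri; rewrite -bg => tri.
  have : (lam - 1) * (b - 1) = 0 by rewrite mulrBr mulrBl; lra.
  move/eqP; rewrite mulf_eq0 !subr_eq0 (negbTE b1) orbF => /eqP //.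
have lamv : lam = (1 - b) / (1 - g).
  have g1' : 1 - g != 0 by rewrite subr_eq0 eq_sym.
  apply: (mulIf g1'); rewrite divfK //; have := tri; lra.
exists Egr, Tri; split.
- by split; [exact: E_gadget | exact: Tri_gadget].
- by split; [exact: E_maxdeg | exact: Tri_maxdeg].
have XEl : X Egr = lam.
  have lb : lam + b != 0 by apply/lt0r_neq0; lra.
  by rewrite XE [lam * g]mulrC tri -mulrA divff ?mulr1.
rewrite XEl /XX A_Tri1 A_Tri0.
have K0p : 0 < Kt0 b g lam.
  rewrite /Kt0; case: hbg => h.
    have bp : 0 < b by rewrite lt_def h hb.
    have : 0 < b ^+ 3 by rewrite exprn_gt0.
    have : 0 <= lam ^+ 2 * g by rewrite mulr_ge0 // exprn_ge0 // ltW.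
    have : 0 <= 2%:R * lam * b by rewrite !mulr_ge0 // ltW.
    lra.
  have gp : 0 < g by rewrite lt_def h hg.
  have : 0 < lam ^+ 2 * g by rewrite mulr_gt0 // exprn_gt0.
  have : 0 <= 2%:R * lam * b by rewrite !mulr_ge0 // ltW.
  have : 0 <= b ^+ 3 by rewrite exprn_ge0.
  lra.
have K1p : 0 <= Kt1 b g lam.
  rewrite /Kt1; have : 0 <= lam ^+ 2 * g ^+ 3 by rewrite mulr_ge0 // exprn_ge0 // ltW.
  have : 0 <= 2%:R * lam * g by rewrite !mulr_ge0 // ltW.
  lra.
have den : lam * Kt1 b g lam + b * Kt0 b g lam != 0.
  apply/lt0r_neq0; have := mulr_ge0 (ltW hl) K1p; have := mulr_ge0 hb (ltW K0p).
  case: hbg => h.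
    have bp : 0 < b by rewrite lt_def h hb.
    by have := mulr_gt0 bp K0p; lra.
  have gp : 0 < g by rewrite lt_def h hg.
  have : 0 < Kt1 b g lam.
    rewrite /Kt1; have : 0 < 2%:R * lam * g by rewrite !mulr_gt0.
    have : 0 <= lam ^+ 2 * g ^+ 3 by rewrite mulr_ge0 // exprn_ge0 // ltW.
    lra.
  by move=> k1; have := mulr_gt0 hl k1; lra.
apply/eqP => e0.
have e := congr1 (fun t => t * (lam * Kt1 b g lam + b * Kt0 b g lam)) e0.
rewrite /= divfK // in e.
have e2 : lam * Kt1 b g lam + b * Kt0 b g lam = lam * g * Kt1 b g lam + Kt0 b g lam.
  by apply: (mulfI (lt0r_neq0 hl)); rewrite e.
have L : lam * (1 - g) = 1 - b by have := tri; lra.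
have diff : (1 - g) ^+ 2 * (Kt1 b g lam - Kt0 b g lam) = (1 - g) ^+ 2 * ((1 - b) ^+ 2 * (g - b)).
  have -> : (1 - g) ^+ 2 * (Kt1 b g lam - Kt0 b g lam) =
     (lam * (1 - g)) ^+ 2 * g * (g ^+ 2 - 1) + 2%:R * (lam * (1 - g)) * (1 - g) * (g - b)
      + (1 - g) ^+ 2 * (b - b ^+ 3) by rewrite /Kt1 /Kt0; ring.
  by rewrite L; ring.
have : (1 - b) * (Kt0 b g lam - Kt1 b g lam) = 0.
  have -> : (1 - b) * (Kt0 b g lam - Kt1 b g lam) =
    (lam * g * Kt1 b g lam + Kt0 b g lam) - (lam * Kt1 b g lam + b * Kt0 b g lam)
    + (lam * (1 - g) - (1 - b)) * Kt1 b g lam by ring.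
  by rewrite e2 L !subrr mul0r addr0.
move/eqP; rewrite mulf_eq0 subr_eq0 eq_sym (negbTE b1) /= subr_eq0 => /eqP K01.
move: diff; rewrite K01 subrr mulr0 => /esym /eqP.
rewrite !mulf_eq0 !subr_eq0 !orbb (eq_sym 1 g) (negbTE g1) (eq_sym 1 b) (negbTE b1) /=.
by move=> /eqP gb; apply: bng.
Qed.

End Final.

End P_L.
Import P_L.

Module P_M.
Import Order.TTheory GRing.Theory Num.Theory.
Set Implicit Arguments. Unset Strict Implicit. Unset Printing Implicit Defensive.
Import Order.TTheory GRing.Theory Num.Theory.
Local Open Scope ring_scope.

Fixpoint Tseq (T S : rootedGraph) (j : nat) : rootedGraph :=
  match j with 0 => T | j'.+1 => NodeG (Tseq T S j') S end.

Lemma mono_inj (R : realType) (x : nat -> R) : (forall j, x j < x j.+1) -> injective x.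
Proof.
move=> hx.
have lt : forall i k, x i < x (i + k.+1)%N.
  move=> i; elim=> [|k IH]; first by rewrite addn1.
  by apply: lt_trans IH _; rewrite [(i + k.+2)%N]addnS; apply: hx.
move=> i j e; case: (ltngtP i j) => // h.
  have := lt i (j - i.+1)%N; rewrite (_ : (i + (j - i.+1).+1)%N = j) ?e ?ltxx //; lia.
have := lt j (i - j.+1)%N; rewrite (_ : (j + (i - j.+1).+1)%N = i) ?e ?ltxx //; lia.
Qed.

Section Main.
Variables (R : realType) (b g lam : R).
Hypotheses (hb : 0 <= b) (hg : 0 <= g) (hbg1 : b * g < 1) (hbg : b != 0 \/ g != 0) (hl : 0 < lam).
Hypothesis hnot : ~ (b = g /\ lam = 1).
Local Notation X := (XX b g lam).

Lemma choose_S T1 D : (3 <= D)%N -> exists S,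
  [/\ is_field_gadget b g lam S, maxdeg_le S D & Psi b g lam (phi b g (X T1) * phi b g (X S)) != X T1].
Proof.
move=> D3; have [S1 [S2 [[g1 g2] [m1 m2] n12]]] := two_cands hb hg hbg1 hbg hl hnot D3.
case: (eqVneq (Psi b g lam (phi b g (X T1) * phi b g (X S1))) (X T1)) => e1; last by exists S1.
case: (eqVneq (Psi b g lam (phi b g (X T1) * phi b g (X S2))) (X T1)) => e2; last by exists S2.
exfalso; move/eqP: n12; apply.
have x0 := XX_gt0 hb hg hbg hl T1.
have p0 := phi_gt0 hb hg hbg1 hl x0.
have q1 := phi_gt0 hb hg hbg1 hl (XX_gt0 hb hg hbg hl S1).
have q2 := phi_gt0 hb hg hbg1 hl (XX_gt0 hb hg hbg hl S2).
have := Psi_inj hb hg hbg1 hl (mulr_gt0 p0 q1) (mulr_gt0 p0 q2) (etrans e1 (esym e2)).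
move/(mulfI (lt0r_neq0 p0)) => e.
by apply: (phi_inj hb hg hbg1 hl (XX_gt0 hb hg hbg hl S1) (XX_gt0 hb hg hbg hl S2) e).
Qed.

Lemma seq_props T1 T2 S D : (3 <= D)%N ->
  is_field_gadget b g lam T1 -> is_field_gadget b g lam T2 -> is_field_gadget b g lam S ->
  maxdeg_le T1 D -> maxdeg_le T2 D -> maxdeg_le S D ->
  X T1 = X T2 -> mag_gap b g lam T1 <> mag_gap b g lam T2 ->
  forall j, [/\ is_field_gadget b g lam (Tseq T1 S j) /\ is_field_gadget b g lam (Tseq T2 S j),
     maxdeg_le (Tseq T1 S j) D, maxdeg_le (Tseq T2 S j) D,
     X (Tseq T1 S j) = X (Tseq T2 S j) &
     mag_gap b g lam (Tseq T1 S j) <> mag_gap b g lam (Tseq T2 S j)].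
Proof.
move=> D3 g1 g2 gS m1 m2 mS eX nM; elim=> [|j [[h1 h2] k1 k2 eXj nMj]] //=.
split.
- by split; [exact: (Node_gadget h1 gS) | exact: (Node_gadget h2 gS)].
- exact: (Node_maxdeg D3 h1 gS k1 mS).
- exact: (Node_maxdeg D3 h2 gS k2 mS).
- by rewrite !(X_Node hb hg hbg1 hbg hl) eXj.
move=> eM.
have := Node_mag_diff hb hg hbg1 hbg hl S eXj; rewrite eM subrr => /esym /eqP.
rewrite mulf_eq0 (negbTE (kappa_Node_neq0 hb hg hbg1 hbg hl _ _)) /= subr_eq0 => /eqP.
exact: nMj.
Qed.

Lemma seq_distinct T1 S : Psi b g lam (phi b g (X T1) * phi b g (X S)) != X T1 ->
  injective (fun j => X (Tseq T1 S j)).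
Proof.
move=> n01.
pose Hf y := Psi b g lam (phi b g y * phi b g (X S)).
have xS := phi_gt0 hb hg hbg1 hl (XX_gt0 hb hg hbg hl S).
have Hmono : forall y z, 0 < y -> y < z -> Hf y < Hf z.
  move=> y z hy hyz; rewrite /Hf.
  have pz := phi_gt0 hb hg hbg1 hl (lt_trans hy hyz).
  apply: (Psi_lt hb hg hbg1 hl (mulr_gt0 pz xS)).
  by rewrite ltr_pM2r //; apply: (phi_lt hb hg hbg1 hl hy hyz).
have step : forall j, X (Tseq T1 S j.+1) = Hf (X (Tseq T1 S j)).
  by move=> j; rewrite /= (X_Node hb hg hbg1 hbg hl).
have pos : forall j, 0 < X (Tseq T1 S j) by move=> j; exact: XX_gt0.
case: (ltgtP (X T1) (Hf (X T1))) => h; last by move: h; rewrite /Hf => h'; rewrite -h' eqxx in n01.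
  apply: mono_inj => j; elim: j => [|j IH]; first by rewrite step.
  by rewrite (step j.+1) (step j); apply: Hmono; rewrite -?step.
pose y j := - X (Tseq T1 S j).
have : injective y.
  apply: mono_inj => j; rewrite /y ltrN2; elim: j => [|j IH]; first by rewrite step.
  by rewrite (step j.+1) (step j); apply: Hmono; rewrite -?step.
by move=> iy i j e; apply: iy; rewrite /y e.
Qed.

End Main.


End P_M.
Import P_M.

Unset Implicit Arguments. Set Strict Implicit.
Import Order.TTheory GRing.Theory Num.Theory.
Local Open Scope ring_scope.

Theorem lemma2p8 (R : realType) (Delta : nat) (b g lam : R) :
  (3 <= Delta)%N ->
  antiferro b g ->
  0 < lam ->
  ~ (b = g /\ lam = 1) ->
  (exists T1 T2 : rootedGraph,
     [/\ is_field_gadget b g lam T1 /\ is_field_gadget b g lam T2,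
         maxdeg_le T1 Delta, maxdeg_le T2 Delta,
         eff_field b g lam T1 = eff_field b g lam T2 &
         mag_gap b g lam T1 <> mag_gap b g lam T2]) ->
  exists T1s T2s : nat -> rootedGraph,
    (forall j,
       [/\ is_field_gadget b g lam (T1s j) /\ is_field_gadget b g lam (T2s j),
           maxdeg_le (T1s j) Delta, maxdeg_le (T2s j) Delta,
           eff_field b g lam (T1s j) = eff_field b g lam (T2s j) &
           mag_gap b g lam (T1s j) <> mag_gap b g lam (T2s j)]) /\
    (forall i j, eff_field b g lam (T1s i) = eff_field b g lam (T1s j) -> i = j).
Proof.
move=> D3 [hb [hg [hbg1 hbg]]] hl hnot [T1 [T2 [[g1 g2] m1 m2 ef mg]]].
have eX : XX b g lam T1 = XX b g lam T2.
  move: ef; rewrite !(eff_XX hb hg hbg hl) => ef.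
  by apply: (mulfI (invr_neq0 (lt0r_neq0 hl))).
have [S [gS mS nS]] := choose_S hb hg hbg1 hbg hl hnot T1 D3.
exists (Tseq T1 S), (Tseq T2 S); split.
  move=> j; have [[h1 h2] k1 k2 eXj nMj] := seq_props hb hg hbg1 hbg hl D3 g1 g2 gS m1 m2 mS eX mg j.
  by split => //; rewrite !(eff_XX hb hg hbg hl) eXj.
move=> i j; rewrite !(eff_XX hb hg hbg hl) => /(mulfI (invr_neq0 (lt0r_neq0 hl))).
exact: (seq_distinct hb hg hbg1 hbg hl nS).
Qed.
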